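(* Let $m\ge 1$ and consider the labeled chip-firing process on $\mathbb{Z}$ starting with $2m$ chips labeled $-m,\dots,-1,1,\dots,m$ at site $0$. In any sequence of firing moves, at every point of the process: for each label $k<0$, the position of chip $k$ is at most $k+m$; and for each label $k>0$, the position of chip $k$ is at least $k-m$.
   Context: Labeled chip-firing on the infinite path graph $\mathbb{Z}$ (each integer $i$ adjacent to $i-1$ and $i+1$): a firing move consists of choosing two chips with labels $a<b$ located at a common site $i$, and moving chip $a$ to site $i-1$ and chip $b$ to site $i+1$. *)

(* Defs.v *)
From Stdlib Require Import ZArith Relations.
Open Scope Z_scope.

Definition is_label (m k : Z) : Prop := -m <= k <= m /\ k <> 0.

(* A configuration assigns to each label the site (an integer) of that chip. *)
Definition config := Z -> Z.

Definition init_config : config := fun _ => 0.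

Definition fire (p : config) (a b : Z) : config :=
  fun k => if Z.eq_dec k a then p a - 1
           else if Z.eq_dec k b then p b + 1
           else p k.

Definition fire_step (m : Z) (p q : config) : Prop :=
  exists a b, is_label m a /\ is_label m b /\ a < b /\ p a = p b /\ q = fire p a b.

Definition reachable (m : Z) (q : config) : Prop :=
  clos_refl_trans_1n config (fire_step m) init_config q.

(* Main.v *)
Require Import Defs.
From Stdlib Require Import ZArith Relations Lia.
Open Scope Z_scope.

Definition Inv (m : Z) (q : config) : Prop :=
  (forall k, is_label m k -> k < 0 -> q k <= k + m) /\
  (forall k, is_label m k -> 0 < k -> k - m <= q k).

Lemma inv_step m p q : Inv m p -> fire_step m p q -> Inv m q.
Proof.
  intros [H1 H2] [a [b [La [Lb [Hab [Hp ->]]]]]].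
  unfold fire; split; intros k Lk Hk;
    destruct (Z.eq_dec k a) as [->|Na]; try destruct (Z.eq_dec k b) as [->|Nb].
  - specialize (H1 a La Hk). lia.
  - pose proof (H1 a La ltac:(lia)). pose proof (H1 b Lb Hk). lia.
  - apply H1; auto.
  - pose proof (H2 b Lb ltac:(lia)). lia.
  - specialize (H2 b Lb Hk). lia.
  - apply H2; auto.
Qed.

Lemma inv_rt m x y : clos_refl_trans_1n config (fire_step m) x y -> Inv m x -> Inv m y.
Proof.
  induction 1; intros; auto. apply IHclos_refl_trans_1n. eapply inv_step; eauto.
Qed.

Theorem lemma2p8 (m : Z) (hm : 1 <= m) (q : config) (hq : reachable m q) :
  (forall k, is_label m k -> k < 0 -> q k <= k + m) /\
  (forall k, is_label m k -> 0 < k -> k - m <= q k).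
Proof.
  apply (inv_rt m init_config q hq).
  unfold Inv, init_config, is_label; split; intros; lia.
Qed.
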